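(* Let $q\geq 2$ and let $G$ be a thin headless spider of order $q$ or a thick headless spider of order $q$. Then $\eta(G)=\lceil (q+1)/2\rceil$.
   Context: All graphs are finite, simple and undirected. A thin headless spider of order $q$ has vertices $u_1,\dots,u_q,v_1,\dots,v_q$, where $\{u_1,\dots,u_q\}$ is a clique, $\{v_1,\dots,v_q\}$ is a stable set, and the edges between the two sets are exactly $(u_i,v_i)$ for $i\in[q]$. A thick headless spider of order $q$ has the same vertices, clique and stable set, but the edges between the two sets are exactly $(u_i,v_j)$ for $i,j\in[q]$, $i\neq j$. For a vertex $v$, $N(v)$ is its set of neighbours. For a positive integer $k$, $[k]=\{1,\dots,k\}$. For a labeling $f:V(G)\to[k]$ and $S\subseteq V(G)$, $f(S)=\sum_{u\in S}f(u)$. A labeling $f:V(G)\to[k]$ is an additive $k$-coloring if $f(N(u))\neq f(N(v))$ for every edge $(u,v)$ of $G$. The additive chromatic number $\eta(G)$ is the least $k$ for which $G$ has an additive $k$-coloring. *)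

(* Defs.v *)
From mathcomp Require Import all_boot.
Set Implicit Arguments. Unset Strict Implicit. Unset Printing Implicit Defensive.

(* A simple graph on a finType T is given by its adjacency relation e
   (assumed symmetric and irreflexive; see the lemmas below for the spiders). *)

Definition nbhd (T : finType) (e : rel T) (v : T) : {set T} := [set u | e v u].

Definition fsum (T : finType) (f : T -> nat) (S : {set T}) : nat :=
  \sum_(u in S) f u.

Definition additive_coloring (T : finType) (e : rel T) (k : nat) (f : T -> nat) :=
  (forall v, 1 <= f v <= k) /\
  (forall u v, e u v -> fsum f (nbhd e u) <> fsum f (nbhd e v)).

Definition additive_chromatic_number (T : finType) (e : rel T) (n : nat) :=
  0 < n /\ (exists f, additive_coloring e n f) /\
  (forall k, 0 < k -> k < n -> ~ exists f, additive_coloring e k f).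

(* Vertices: inl i = u_(i+1) (clique), inr i = v_(i+1) (stable set). *)
Definition spider_vertex (q : nat) : finType := ('I_q + 'I_q)%type.

Definition thin_spider (q : nat) : rel (spider_vertex q) :=
  fun x y => match x, y with
  | inl i, inl j => i != j
  | inl i, inr j => i == j
  | inr i, inl j => i == j
  | inr _, inr _ => false
  end.

Definition thick_spider (q : nat) : rel (spider_vertex q) :=
  fun x y => match x, y with
  | inl i, inl j => i != j
  | inl i, inr j => i != j
  | inr i, inl j => i != j
  | inr _, inr _ => false
  end.
Arguments thin_spider q : clear implicits.
Arguments thick_spider q : clear implicits.

(* Main.v *)
Require Import Defs.
From mathcomp Require Import all_boot.
From mathcomp Require Import zify.

Lemma fsum_split (q : nat) (e : rel (spider_vertex q)) (f : spider_vertex q -> nat) x :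
  fsum f (nbhd e x) =
  \sum_(j < q) (if e x (@inl 'I_q 'I_q j) then f (@inl 'I_q 'I_q j) else 0) +
  \sum_(j < q) (if e x (@inr 'I_q 'I_q j) then f (@inr 'I_q 'I_q j) else 0).
Proof.
rewrite /fsum /nbhd big_mkcond /=.
rewrite (big_sumType _ predT) /=.
by congr (_ + _); apply: eq_bigr => j _; rewrite inE.
Qed.

Lemma sum_neq (q : nat) (i : 'I_q) (g : 'I_q -> nat) :
  \sum_(j < q) (if i != j then g j else 0) + g i = \sum_(j < q) g j.
Proof.
rewrite [RHS](bigD1 i) //= [in LHS](bigD1 i) //= eqxx /= add0n addnC.
congr (_ + _); apply: eq_bigr => j; rewrite eq_sym => ->; done.
Qed.

Lemma sum_eq (q : nat) (i : 'I_q) (g : 'I_q -> nat) :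
  \sum_(j < q) (if i == j then g j else 0) = g i.
Proof.
rewrite (bigD1 i) //= eqxx big1 ?addn0 // => j; rewrite eq_sym => /negbTE ->; done.
Qed.

Lemma sum_ge (q : nat) (i : 'I_q) (g : 'I_q -> nat) :
  (forall j, 1 <= g j) -> g i + (q - 1) <= \sum_(j < q) g j.
Proof.
move=> hg; rewrite (bigD1 i) //= leq_add2l.
apply: (@leq_trans (\sum_(j < q | j != i) 1)); last by apply: leq_sum.
by rewrite sum1_card cardC1 card_ord subn1.
Qed.

Lemma inj_bound (q n : nat) (g : 'I_q -> nat) :
  (forall i, g i <= n) -> (forall i j, g i = g j -> i = j) -> q <= n.+1.
Proof.
move=> hb hi.
pose h : 'I_q -> 'I_n.+1 := fun i => inord (g i).
have : injective h.
  move=> i j /(congr1 val); rewrite /h /= !inordK ?ltnS ?hb //; exact: hi.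
by move/leq_card; rewrite !card_ord.
Qed.

Section S.
Variable q : nat.
Variable f : spider_vertex q -> nat.
Let A := \sum_(j < q) f (@inl 'I_q 'I_q j).
Let B := \sum_(j < q) f (@inr 'I_q 'I_q j).

Lemma thin_inl i : fsum f (nbhd (thin_spider q) (@inl 'I_q 'I_q i)) + f (@inl 'I_q 'I_q i) = A + f (@inr 'I_q 'I_q i).
Proof.
rewrite fsum_split /= sum_eq -addnA [_ + f _]addnC addnA sum_neq //.
Qed.

Lemma thin_inr i : fsum f (nbhd (thin_spider q) (@inr 'I_q 'I_q i)) = f (@inl 'I_q 'I_q i).
Proof.
rewrite fsum_split /= sum_eq big1 ?addn0 //.
Qed.

Lemma thick_inl i : fsum f (nbhd (thick_spider q) (@inl 'I_q 'I_q i)) + f (@inl 'I_q 'I_q i) + f (@inr 'I_q 'I_q i) = A + B.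
Proof.
rewrite fsum_split /=.
have h1 := @sum_neq q i (fun j => f (@inl 'I_q 'I_q j)); have h2 := @sum_neq q i (fun j => f (@inr 'I_q 'I_q j)).
rewrite /A /B; rewrite -h1 -h2 -addnA addnACA //.
Qed.

Lemma thick_inr i : fsum f (nbhd (thick_spider q) (@inr 'I_q 'I_q i)) + f (@inl 'I_q 'I_q i) = A.
Proof.
rewrite fsum_split /= [X in _ + X + _]big1 // addn0; exact: (@sum_neq q i (fun j => f (@inl 'I_q 'I_q j))).
Qed.
End S.
Arguments thin_inl {q}.
Arguments thin_inr {q}.
Arguments thick_inl {q}.
Arguments thick_inr {q}.

Lemma thin_lower q k f : additive_coloring (thin_spider q) k f -> q <= (2 * k - 2).+1.
Proof.
move=> [hb he].
apply: (@inj_bound q (2 * k - 2) (fun i => f (@inr 'I_q 'I_q i) + k - f (@inl 'I_q 'I_q i) - 1)).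
  move=> i; have := hb (@inl 'I_q 'I_q i); have := hb (@inr 'I_q 'I_q i); lia.
move=> i j hg; case: (eqVneq i j) => // hij; exfalso.
have e : thin_spider q (@inl 'I_q 'I_q i) (@inl 'I_q 'I_q j) := hij.
have := he (@inl 'I_q 'I_q i) (@inl 'I_q 'I_q j) e; have := thin_inl f i; have := thin_inl f j.
have := hb (@inl 'I_q 'I_q i); have := hb (@inr 'I_q 'I_q i); have := hb (@inl 'I_q 'I_q j); have := hb (@inr 'I_q 'I_q j).
move: hg. lia.
Qed.

Lemma thick_lower q k f : additive_coloring (thick_spider q) k f -> q <= (2 * k - 2).+1.
Proof.
move=> [hb he].
apply: (@inj_bound q (2 * k - 2) (fun i => f (@inl 'I_q 'I_q i) + f (@inr 'I_q 'I_q i) - 2)).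
  move=> i; have := hb (@inl 'I_q 'I_q i); have := hb (@inr 'I_q 'I_q i); lia.
move=> i j hg; case: (eqVneq i j) => // hij; exfalso.
have e : thick_spider q (@inl 'I_q 'I_q i) (@inl 'I_q 'I_q j) := hij.
have := he (@inl 'I_q 'I_q i) (@inl 'I_q 'I_q j) e; have := thick_inl f i; have := thick_inl f j.
have := hb (@inl 'I_q 'I_q i); have := hb (@inr 'I_q 'I_q i); have := hb (@inl 'I_q 'I_q j); have := hb (@inr 'I_q 'I_q j).
move: hg; lia.
Qed.

Definition fthin q k : spider_vertex q -> nat := fun x =>
  match x with inl i => (i.+1 - k).+1 | inr i => if i < k then i.+1 else 1 end.

Definition fthick q k : spider_vertex q -> nat := fun x =>
  match x with inl i => (i.+1 - k).+1 | inr i => minn k i.+1 end.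

Arguments fthin {q}.
Arguments fthick {q}.

Lemma thin_upper q k : 2 <= q -> 2 <= k -> q < 2 * k -> additive_coloring (thin_spider q) k (fthin k).
Proof.
move=> hq hk hqk; split.
  case=> i /=; have := ltn_ord i; [lia | case: ifP; lia].
have hA : forall i : 'I_q, fthin k (@inl 'I_q 'I_q i) + (q - 1) <= \sum_(j < q) fthin k (@inl 'I_q 'I_q j).
  move=> i; apply: (@sum_ge q i (fun j => fthin k (@inl 'I_q 'I_q j))) => j /=; lia.
case=> i [] j //= e.
- have hij : nat_of_ord i <> nat_of_ord j by move=> h; move: e; rewrite (val_inj h) eqxx.
  have := thin_inl (fthin k) i; have := thin_inl (fthin k) j; rewrite /=.
  have := ltn_ord i; have := ltn_ord j.
  case: ifP; case: ifP; lia.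
- move/eqP: e => <-.
  rewrite thin_inr /=.
  have := thin_inl (fthin k) i; have := hA i; have := ltn_ord i; rewrite /=.
  case: ifP; lia.
- move/eqP: e => <-.
  rewrite thin_inr /=.
  have := thin_inl (fthin k) i; have := hA i; have := ltn_ord i; rewrite /=.
  case: ifP; lia.
Qed.

Lemma thick_upper q k : 2 <= q -> 2 <= k -> q < 2 * k -> additive_coloring (thick_spider q) k (fthick k).
Proof.
move=> hq hk hqk; split.
  case=> i /=; have := ltn_ord i; lia.
have hB : q + 1 <= \sum_(j < q) fthick k (@inr 'I_q 'I_q j).
  have h1 : 1 < q by [].
  have := (@sum_ge q (Ordinal h1) (fun j => fthick k (@inr 'I_q 'I_q j))).
  rewrite /=; move=> h; apply: leq_trans (h _) => //; [lia | move=> j /=; lia].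
case=> i [] j //= e.
- have hij : nat_of_ord i <> nat_of_ord j by move=> h; move: e; rewrite (val_inj h) eqxx.
  have := thick_inl (fthick k) i; have := thick_inl (fthick k) j; rewrite /=.
  have := ltn_ord i; have := ltn_ord j; lia.
- have := hB; have := thick_inl (fthick k) i; have := thick_inr (fthick k) j; rewrite /=.
  have := ltn_ord i; have := ltn_ord j; clear hB e; move=> ? ? h1 h2 h3; lia.
- have := hB; have := thick_inl (fthick k) j; have := thick_inr (fthick k) i; rewrite /=.
  have := ltn_ord i; have := ltn_ord j; lia.
Qed.

Theorem mainTheorem12 (q : nat) (hq : 2 <= q) :
  additive_chromatic_number (thin_spider q) ((q + 2) %/ 2) /\
  additive_chromatic_number (thick_spider q) ((q + 2) %/ 2).
Proof.
have hk : 2 <= (q + 2) %/ 2 by lia.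
have hqk : q < 2 * ((q + 2) %/ 2) by lia.
split; (split; [lia | split]).
- by exists (fthin ((q + 2) %/ 2)); apply: thin_upper.
- move=> k k0 kl [f /thin_lower]; lia.
- by exists (fthick ((q + 2) %/ 2)); apply: thick_upper.
- move=> k k0 kl [f /thick_lower]; lia.
Qed.
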